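(* Let $Y$ be a set, $X$ a real vector space, $K$ a compact topological space and $(\Omega,\Sigma,\nu)$ a measure space. Let $\mathcal H$ be a set of functions $\Omega\to X$ with $\alpha\mathcal H=\mathcal H$ for all $\alpha\in\mathbb R$, and let $\mathcal F$ be a set of maps $X\to Y$. Let $S:\mathcal F\times\mathcal H\to\{\text{measurable functions }\Omega\to\mathbb R\}$ and $R:\mathcal H\times K\to\{\text{measurable functions }\Omega\to\mathbb R\}$ satisfy $$|\alpha S(u,f)|=|S(u,\alpha f)|,\qquad |\alpha R(f,k)|=|R(\alpha f,k)|$$ for all $\alpha\in\mathbb R$, $u\in\mathcal F$, $f\in\mathcal H$, $k\in K$. Suppose that for all $1\le r<s<\infty$ there is a constant $C_{s,r}$ with $\|h\|_{L_s(\nu)}\le C_{s,r}\|h\|_{L_r(\nu)}$ for all measurable $h$. Let $1\le p_1\le p_2<\infty$ and $1\le q_1\le q_2<\infty$ with $$\frac1{p_1}-\frac1{p_2}\le \frac1{q_1}-\frac1{q_2}.$$ Then $RS(q_1,p_1)\subseteq RS(q_2,p_2)$.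
   Context: For $g:\Omega\to\mathbb R$, $f\in\mathcal H$ and $w\in\Omega$, $g(w)f\in\mathcal H$ denotes the scalar multiple of the function $f$ by the number $g(w)$, and $S(u,g(w)f)(w)$ denotes the value at the point $w$ of the function $S(u,g(w)f)$ (similarly for $R$). For $1\le q,p<\infty$, a map $u\in\mathcal F$ is called $(q,p)$-$RS$ summing if there is a constant $C>0$ such that $$\Big(\int_\Omega |S(u,g(w)f)(w)|^q\,d\nu(w)\Big)^{1/q}\le C\sup_{k\in K}\Big(\int_\Omega |R(g(w)f,k)(w)|^p\,d\nu(w)\Big)^{1/p}$$ for all $f\in\mathcal H$ and all $g\in\mathcal L_q(\nu)$. $RS(q,p)$ denotes the class of all $(q,p)$-$RS$ summing maps. *)

(* Defs.v *)
From HB Require Import structures.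
From mathcomp Require Import all_boot all_order all_algebra.
From mathcomp Require Import all_classical all_reals all_analysis.
Set Implicit Arguments. Unset Strict Implicit. Unset Printing Implicit Defensive.
Import Order.TTheory GRing.Theory Num.Theory.
Import numFieldNormedType.Exports.
Local Open Scope classical_set_scope.
Local Open Scope ring_scope.

Definition in_Lq {d} {T : measurableType d} {R : realType}
  (nu : {measure set T -> \bar R}) (q : R) (g : T -> R) : Prop :=
  measurable_fun [set: T] g /\ finite_norm nu q%:E g.

Definition RS_summing {R : realType} {X : lmodType R} {Y : Type} {K : Type}
  {d} {T : measurableType d} (nu : {measure set T -> \bar R})
  (H : set (T -> X)) (F : set (X -> Y))
  (S : (X -> Y) -> (T -> X) -> T -> R) (Rm : (T -> X) -> K -> T -> R)
  (q p : R) (u : X -> Y) : Prop :=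
  F u /\
  exists C : R, 0 < C /\
    forall (f : T -> X) (g : T -> R), H f -> in_Lq nu q g ->
      (Lnorm nu q%:E (EFin \o (fun w => S u (g w *: f) w))
       <= C%:E * ereal_sup [set Lnorm nu p%:E (EFin \o (fun w => Rm (g w *: f) k w))
                           | k in [set: K]])%E.

Definition RS {R : realType} {X : lmodType R} {Y : Type} {K : Type}
  {d} {T : measurableType d} (nu : {measure set T -> \bar R})
  (H : set (T -> X)) (F : set (X -> Y))
  (S : (X -> Y) -> (T -> X) -> T -> R) (Rm : (T -> X) -> K -> T -> R)
  (q p : R) : set (X -> Y) :=
  [set u | RS_summing nu H F S Rm q p u].

(* Main.v *)
Require Import Defs.
From HB Require Import structures.
From mathcomp Require Import all_boot all_order all_algebra.
From mathcomp Require Import all_classical all_reals all_analysis.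
From mathcomp Require Import measurable_realfun ring lra.
Import Order.TTheory GRing.Theory Num.Theory Num.Def.
Import numFieldNormedType.Exports.
Local Open Scope classical_set_scope.
Local Open Scope ring_scope.

Section H.
Context {R : realType} {d} {T : measurableType d} (nu : {measure set T -> \bar R}).

Notation J f r := (\int[nu]_x ((`|f x| `^ r)%R)%:E)%E.

Lemma Lnorm_unl (f : T -> R) (r : R) :
  Lnorm nu r%:E (EFin \o f) = (J f r `^ r^-1)%E.
Proof. by rewrite unlock. Qed.

Lemma Lnorm_ext (f g : T -> R) (r : R) : (forall x, `|f x| = `|g x|) ->
  Lnorm nu r%:E (EFin \o f) = Lnorm nu r%:E (EFin \o g).
Proof. by move=> fg; rewrite !Lnorm_unl; under eq_integral do rewrite fg. Qed.

Lemma mpow (h : T -> R) (r : R) : measurable_fun setT h ->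
  measurable_fun [set: T] (fun x => ((`|h x| `^ r)%R)%:E).
Proof.
move=> mh; apply/measurable_EFinP; apply: (@measurableT_comp _ _ _ _ _ _ (@powR R ^~ r)) => //.
exact: measurableT_comp.
Qed.

Lemma J_ge0 (h : T -> R) r : (0 <= J h r)%E.
Proof. by apply: integral_ge0 => x _; rewrite lee_fin powR_ge0. Qed.

Lemma J_le (f g : T -> R) (r : R) : 0 <= r ->
  measurable_fun setT f -> measurable_fun setT g ->
  (forall x, `|f x| <= `|g x|) -> (J f r <= J g r)%E.
Proof.
move=> r0 mf mg fg; eapply ge0_le_integral => //.
- exact: mpow.
- exact: mpow.
- by move=> x _; rewrite lee_fin ge0_ler_powR.
Qed.

Lemma poweR_le (x y : \bar R) r : 0 <= r -> (0 <= x)%E -> (x <= y)%E -> (x `^ r <= y `^ r)%E.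
Proof.
move=> r0 x0 xy; apply: gt0_ler_poweR => //; rewrite in_itv/= leey ?x0//.
by rewrite (le_trans x0 xy).
Qed.

Lemma Lnorm_le (f g : T -> R) (r : R) : 0 < r ->
  measurable_fun setT f -> measurable_fun setT g ->
  (forall x, `|f x| <= `|g x|) ->
  (Lnorm nu r%:E (EFin \o f) <= Lnorm nu r%:E (EFin \o g))%E.
Proof.
move=> r0 mf mg fg; rewrite !Lnorm_unl.
apply: poweR_le; first by rewrite invr_ge0 ltW.
  exact: J_ge0.
by apply: J_le => //; rewrite ltW.
Qed.
End H.

Section G.
Context {R : realType} {d} {T : measurableType d} (nu : {measure set T -> \bar R}).
Notation J f r := (\int[nu]_x ((`|f x| `^ r)%R)%:E)%E.

Lemma gholder (f g : T -> R) (r a b : R) : 0 < r -> 0 < a -> 0 < b ->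
  a^-1 + b^-1 = r^-1 -> measurable_fun setT f -> measurable_fun setT g ->
  (Lnorm nu r%:E (EFin \o (f \* g)%R) <=
   Lnorm nu a%:E (EFin \o f) * Lnorm nu b%:E (EFin \o g))%E.
Proof.
move=> r0 a0 b0 abr mf mg.
pose F x := `|f x| `^ r. pose G x := `|g x| `^ r.
have mF : measurable_fun setT F.
  by apply: (@measurableT_comp _ _ _ _ _ _ (@powR R ^~ r)) => //; exact: measurableT_comp.
have mG : measurable_fun setT G.
  by apply: (@measurableT_comp _ _ _ _ _ _ (@powR R ^~ r)) => //; exact: measurableT_comp.
have ar0 : 0 < a / r by rewrite divr_gt0.
have br0 : 0 < b / r by rewrite divr_gt0.
have abr1 : (a / r)^-1 + (b / r)^-1 = 1.
  by rewrite !invf_div -mulrDr abr divff ?gt_eqF.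
have H := hoelder nu mF mG ar0 br0 abr1.
have e1 : Lnorm nu 1 (EFin \o (F \* G)) = J (f \* g) r.
  rewrite Lnorm1; apply: eq_integral => x _ /=.
  by rewrite /F /G /= ger0_norm ?mulr_ge0 ?powR_ge0 // normrM powRM.
have eF : Lnorm nu (a / r)%:E (EFin \o F) = (Lnorm nu a%:E (EFin \o f) `^ r)%E.
  rewrite !Lnorm_unl -poweRrM; congr (_ `^ _)%E.
    apply: eq_integral => x _; rewrite /F ger0_norm ?powR_ge0// -powRrM.
    by rewrite mulrCA divff ?gt_eqF// mulr1.
  by rewrite invf_div mulrC.
have eG : Lnorm nu (b / r)%:E (EFin \o G) = (Lnorm nu b%:E (EFin \o g) `^ r)%E.
  rewrite !Lnorm_unl -poweRrM; congr (_ `^ _)%E.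
    apply: eq_integral => x _; rewrite /G ger0_norm ?powR_ge0// -powRrM.
    by rewrite mulrCA divff ?gt_eqF// mulr1.
  by rewrite invf_div mulrC.
rewrite e1 eF eG -poweRM ?Lnorm_ge0// in H.
rewrite (Lnorm_unl nu (f \* g)%R).
have -> : (Lnorm nu a%:E (EFin \o f) * Lnorm nu b%:E (EFin \o g) =
  ((Lnorm nu a%:E (EFin \o f) * Lnorm nu b%:E (EFin \o g)) `^ r) `^ r^-1)%E.
  by rewrite -poweRrM divff ?gt_eqF// poweRe1// mule_ge0 ?Lnorm_ge0.
apply: poweR_le => //; first by rewrite invr_ge0 ltW.
exact: J_ge0.
Qed.

Lemma JZ (h : T -> R) (c r : R) : 0 <= r -> measurable_fun setT h ->
  J (fun x => c * h x) r = ((`|c| `^ r)%:E * J h r)%E.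
Proof.
move=> r0 mh.
under eq_integral do rewrite normrM powRM // EFinM.
by rewrite ge0_integralZl_EFin //; exact: mpow.
Qed.

Lemma J_trunc (G A : T -> R) (r : R) (B : \bar R) : 0 < r ->
  measurable_fun setT G -> measurable_fun setT A ->
  (forall n : nat, (J (fun x => `|G x| * minr `|A x| n%:R) r <= B)%E) ->
  (J (G \* A) r <= B)%E.
Proof.
move=> r0 mG mA hB.
pose m n x := `|G x| * minr `|A x| n%:R.
have mm n : measurable_fun setT (m n).
  apply: measurable_funM; first exact: measurableT_comp.
  by apply: measurable_minr; [exact: measurableT_comp|exact: measurable_cst].
pose phi n x := ((`|m n x| `^ r)%:E : \bar R).
have mphi n : measurable_fun setT (phi n) by exact: mpow.
have phi0 n x : [set: T] x -> (0 <= phi n x)%E by move=> _; rewrite lee_fin powR_ge0.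
have ndphi x : [set: T] x -> nondecreasing_seq (phi^~ x).
  move=> _ i j ij.
  have m0 k : 0 <= m k x by rewrite /m mulr_ge0 // le_min normr_ge0 ler0n.
  have mij : m i x <= m j x.
    rewrite /m; apply: ler_wpM2l => //; by rewrite le_min !ge_min lexx ler_nat ij !orbT.
  rewrite lee_fin (ger0_norm (m0 i)) (ger0_norm (m0 j)).
  by apply: ge0_ler_powR => //; [exact: ltW|rewrite nnegrE|rewrite nnegrE].
have := @monotone_convergence _ _ _ nu setT measurableT phi mphi phi0 ndphi.
have -> : (fun x => limn (phi^~ x)) = (fun x => ((`|(G \* A) x| `^ r)%:E)).
  apply/funext => x; apply: cvg_lim => //; apply: cvg_near_cst.
  near=> n; rewrite /phi /m; congr ((_ `^ r)%:E).
  rewrite /= !normrM normr_id; congr (_ * _).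
  rewrite ger0_norm ?le_min ?normr_ge0 ?ler0n //.
  apply/min_idPl.
  near: n; exists (truncn `|A x|).+1 => // n /= hn.
  by apply: ltW; apply: (lt_le_trans (truncnS_gt _)); rewrite ler_nat.
move=> ->; apply: lime_le.
  apply: ereal_nondecreasing_is_cvgn => i j ij.
  apply: ge0_le_integral => //; first by move=> x; exact: phi0.
  by move=> x _; exact: ndphi.
by near=> n; exact: hB.
Unshelve. all: by end_near.
Qed.
End G.

Section K.
Context {R : realType} {d} {T : measurableType d} (nu : {measure set T -> \bar R}).
Notation J f r := (\int[nu]_x ((`|f x| `^ r)%R)%:E)%E.
Notation N r f := (Lnorm nu r%:E (EFin \o f)).

Lemma J_lty (g : T -> R) r : r != 0 -> (N r g < +oo)%E -> (J g r < +oo)%E.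
Proof. by move=> r0; rewrite Lnorm_unl; apply: lty_poweRy; rewrite invr_neq0. Qed.

Lemma N_lty (g : T -> R) r : (J g r < +oo)%E -> (N r g < +oo)%E.
Proof. by move=> h; rewrite Lnorm_unl; apply: poweR_lty. Qed.

Lemma N_pow (m : T -> R) (th s : R) : (forall x, 0 <= m x) ->
  N s (fun x => m x `^ th) = (J m (th * s) `^ s^-1)%E.
Proof.
move=> m0; rewrite Lnorm_unl; congr (_ `^ _)%E; apply: eq_integral => x _.
by rewrite ger0_norm ?powR_ge0 // -powRrM ger0_norm.
Qed.


Lemma key (K : Type) (a : T -> R) (b : K -> T -> R) (g : T -> R)
  (q1 q2 p1 p2 t p' C C1 C2 beta : R) :
  1 <= q1 -> q1 < q2 -> 0 < p1 -> 0 < t -> 0 < p' -> t^-1 + p'^-1 = p1^-1 ->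
  0 < C -> 0 < C1 -> 0 < C2 -> 0 <= beta ->
  measurable_fun setT a -> (forall k, measurable_fun setT (b k)) ->
  (forall g', measurable_fun [set: T] g' /\ (N q1 g' < +oo)%E ->
     (N q1 (g' \* a)%R <= C%:E * ereal_sup [set N p1 (g' \* b k)%R | k in [set: K]])%E) ->
  (forall h, measurable_fun setT h ->
     (N t h <= C1%:E * N (q2 / (q2 / q1 - 1)) h)%E) ->
  (forall h, measurable_fun setT h -> (N p' h <= C2%:E * N p2 h)%E) ->
  measurable_fun [set: T] g -> (N q2 g < +oo)%E ->
  (forall k, (N p2 (g \* b k)%R <= beta%:E)%E) ->
  (N q2 (g \* a)%R <= (C * C1 * C2 * beta)%:E)%E.
Proof.
move=> q11 q12 p10 t0 p'0 tp' C0 C10 C20 beta0 ma mb hyp hst hp mg gfin gb.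
set th := q2 / q1 - 1.
set s := q2 / th.
have q10 : 0 < q1 by lra.
have q20 : 0 < q2 by lra.
have th0 : 0 < th by rewrite /th subr_gt0 ltr_pdivlMr // mul1r.
have ths : th * s = q2 by rewrite /s mulrCA divff ?gt_eqF // mulr1.
have th1 : (th + 1) * q1 = q2 by rewrite /th subrK mulfVK // gt_eqF.
have sinv : q1^-1 = s^-1 + q2^-1.
  rewrite /s invf_div /th; field; rewrite ?gt_eqF //.
set Kc := C * C1 * C2 * beta.
have Kc0 : 0 <= Kc by rewrite /Kc !mulr_ge0 // ltW.
have Jg : (J g q2 < +oo)%E by apply: J_lty => //; rewrite gt_eqF.
suff claim : forall n : nat,
    (J (fun x => `|g x| * minr `|a x| n%:R) q2 <= (Kc `^ q2)%:E)%E.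
  have hJ := @J_trunc _ _ _ nu g a q2 _ q20 mg ma claim.
  rewrite Lnorm_unl.
  have -> : Kc%:E = ((Kc `^ q2)%:E `^ q2^-1)%E.
    by rewrite poweR_EFin -powRrM divff ?gt_eqF // powRr1.
  apply: poweR_le => //; first by rewrite invr_ge0 ltW.
  exact: J_ge0.
move=> n.
set m := fun x => `|g x| * minr `|a x| n%:R.
have m0 x : 0 <= m x by rewrite /m mulr_ge0 // le_min normr_ge0 ler0n.
have mm : measurable_fun setT m.
  apply: measurable_funM; first exact: measurableT_comp.
  by apply: measurable_minr; [exact: measurableT_comp|exact: measurable_cst].
have mle x : m x <= n%:R * `|g x|.
  by rewrite /m mulrC ler_wpM2r // ge_min lexx orbT.
set lam := fun x => m x `^ th.
have lam0 x : 0 <= lam x by exact: powR_ge0.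
have mlam : measurable_fun setT lam.
  exact: (@measurableT_comp _ _ _ _ _ _ (@powR R ^~ th)).
set g' := (g \* lam)%R.
have mg' : measurable_fun setT g' by exact: measurable_funM.
have Mfin : (J m q2 < +oo)%E.
  apply: (le_lt_trans (@J_le _ _ _ nu m (fun x => n%:R * g x) q2 (ltW q20) mm _ _)).
  - by apply: measurable_funM => //; exact: measurable_cst.
  - by move=> x; rewrite ger0_norm // normrM normr_nat.
  rewrite JZ //; last exact: ltW.
  by rewrite lte_mul_pinfty // ?lee_fin ?powR_ge0 // ?J_ge0.
have g'L : measurable_fun [set: T] g' /\ (N q1 g' < +oo)%E.
  split => //; apply: N_lty.
  pose psi x := (n%:R `^ th) * (`|g x| `^ (q2 / q1)).
  have mpsi : measurable_fun setT psi.
    apply: measurable_funM; first exact: measurable_cst.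
    apply: (@measurableT_comp _ _ _ _ _ _ (@powR R ^~ (q2 / q1))) => //.
    exact: measurableT_comp.
  apply: (le_lt_trans (@J_le _ _ _ nu g' psi q1 (ltW q10) mg' mpsi _)).
    move=> x.
    have -> : `|g' x| = `|g x| * lam x by rewrite /g' /= normrM (ger0_norm (lam0 x)).
    have psi0 : 0 <= psi x by rewrite /psi mulr_ge0 // powR_ge0.
    rewrite (ger0_norm psi0) /psi.
    have -> : q2 / q1 = th + 1 by rewrite /th subrK.
    have hth1 : 0 < th + 1 by rewrite ltr_wpDl // ltW.
    rewrite -(mulr_powRB1 (normr_ge0 (g x)) hth1) addrK.
    rewrite mulrCA ler_wpM2l // -powRM //; apply: ge0_ler_powR.
    - exact: ltW.
    - by rewrite nnegrE.
    - by rewrite nnegrE mulr_ge0.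
    - exact: mle.
  rewrite /psi JZ; last 2 first.
  - exact: ltW.
  - apply: (@measurableT_comp _ _ _ _ _ _ (@powR R ^~ (q2 / q1))) => //.
    exact: measurableT_comp.
  apply: lte_mul_pinfty; [by rewrite lee_fin powR_ge0 | by [] | ].
  have -> : (J (fun x => `|g x| `^ (q2 / q1)) q1 = J g q2)%E.
    apply: eq_integral => x _; rewrite ger0_norm ?powR_ge0 // -powRrM.
    by rewrite mulfVK // gt_eqF.
  exact: Jg.
set M := J m q2.
have M0 : (0 <= M)%E by exact: J_ge0.
have LHS : (M `^ (q1^-1)%R <= N q1 (g' \* a)%R)%E.
  have -> : (M `^ (q1^-1)%R = N q1 (fun x => (m x `^ (th + 1))%R))%E.
    by rewrite N_pow // th1.
  apply: Lnorm_le => //.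
  - apply: (@measurableT_comp _ _ _ _ _ _ (@powR R ^~ (th + 1))) => //.
  - exact: measurable_funM.
  move=> x; rewrite ger0_norm ?powR_ge0 //.
  have hth1 : 0 < th + 1 by rewrite ltr_wpDl // ltW.
  rewrite -(mulr_powRB1 (m0 x) hth1) addrK.
  rewrite /g' /= !normrM (ger0_norm (lam0 x)) mulrC -mulrA [in leRHS]mulrCA.
  apply: ler_wpM2l; first exact: lam0.
  by rewrite /m; apply: ler_wpM2l => //; rewrite ge_min lexx.
have RHS k : (N p1 (g' \* b k)%R <= (C1 * C2 * beta)%:E * M `^ (s^-1)%R)%E.
  have mgb : measurable_fun setT (g \* b k)%R by exact: measurable_funM.
  rewrite (@Lnorm_ext _ _ _ nu _ (lam \* (g \* b k))%R); last first.
    by move=> x; rewrite /g' /=; congr `|_|; ring.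
  apply: (le_trans (@gholder _ _ _ nu lam (g \* b k)%R p1 t p' p10 t0 p'0 tp' mlam mgb)).
  have e1 : (N t lam <= C1%:E * M `^ (s^-1)%R)%E.
    have := hst _ mlam; rewrite -/th -/s.
    by move=> h; apply: (le_trans h); rewrite /lam N_pow // ths.
  have e2 : (N p' (g \* b k)%R <= C2%:E * beta%:E)%E.
    apply: (le_trans (hp _ mgb)).
    by apply: lee_pmul => //; [rewrite lee_fin ltW|exact: Lnorm_ge0].
  apply: (le_trans (lee_pmul (Lnorm_ge0 _ _ _) (Lnorm_ge0 _ _ _) e1 e2)).
  rewrite !EFinM.
  by rewrite (muleC C1%:E) -muleA muleC !muleA.
have SUP : (ereal_sup [set N p1 (g' \* b k)%R | k in [set: K]]
    <= (C1 * C2 * beta)%:E * M `^ (s^-1)%R)%E.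
  by apply: ge_ereal_sup => _ [k _ <-]; exact: RHS.
have H := le_trans LHS (le_trans (hyp g' g'L) (lee_wpmul2l (ltW (C0 : (0 < C%:E)%E)) SUP)).
have Mfn : M \is a fin_num by rewrite ge0_fin_numE.
rewrite -(fineK Mfn) in H *.
set Mr := fine M in H *.
have Mr0 : 0 <= Mr by rewrite /Mr fine_ge0.
rewrite !poweR_EFin -!EFinM lee_fin in H; rewrite lee_fin.
have [->|Mpos] := eqVneq Mr 0; first exact: powR_ge0.
have Mgt0 : 0 < Mr by rewrite lt_def Mpos Mr0.
rewrite sinv powRD ?Mpos ?implybT // in H.
have H2 : Mr `^ q2^-1 <= Kc.
  rewrite -(ler_pM2l (powR_gt0 (s^-1) Mgt0)).
  apply: (le_trans H); rewrite /Kc; rewrite le_eqVlt; apply/orP; left; apply/eqP; ring.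
have -> : Mr = (Mr `^ q2^-1) `^ q2.
  by rewrite -powRrM mulVf ?gt_eqF // powRr1.
apply: ge0_ler_powR => //; first exact: ltW.
by rewrite nnegrE powR_ge0.
Qed.

End K.

Lemma exps {R : realType} (q1 q2 p1 p2 : R) : 1 <= p1 -> p1 <= p2 -> 1 <= q1 -> q1 < q2 ->
  p1^-1 - p2^-1 <= q1^-1 - q2^-1 ->
  exists t p', [/\ 0 < t, 0 < p', t^-1 + p'^-1 = p1^-1, 1 <= q2 / (q2 / q1 - 1) &
     q2 / (q2 / q1 - 1) <= t /\ p2 <= p'].
Proof.
move=> p11 p12 q11 q12 hpq.
have p10 : 0 < p1 by lra.
have p20 : 0 < p2 by lra.
have q10 : 0 < q1 by lra.
have q20 : 0 < q2 by lra.
have th0 : 0 < q2 / q1 - 1 by rewrite subr_gt0 ltr_pdivlMr // mul1r.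
set s := q2 / (q2 / q1 - 1).
have s0 : 0 < s by rewrite divr_gt0.
have sinv : s^-1 = q1^-1 - q2^-1.
  rewrite /s invf_div; field; rewrite ?gt_eqF //.
have i1le : p1^-1 <= 1 by rewrite invf_le1.
have j1le : q1^-1 <= 1 by rewrite invf_le1.
have i21 : p2^-1 <= p1^-1 by rewrite lef_pV2 ?posrE.
have j21 : q2^-1 < q1^-1 by rewrite ltf_pV2 ?posrE.
have i20 : 0 < p2^-1 by rewrite invr_gt0.
have j20 : 0 < q2^-1 by rewrite invr_gt0.
set x := minr (q1^-1 - q2^-1) (p1^-1 - p2^-1 / 2).
have xle1 : x <= q1^-1 - q2^-1 by rewrite ge_min lexx.
have xle2 : x <= p1^-1 - p2^-1 / 2 by rewrite ge_min lexx orbT.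
have xcase : x = q1^-1 - q2^-1 \/ x = p1^-1 - p2^-1 / 2.
  by rewrite /x /minr; case: ifP => _; [left|right].
have x0 : 0 < x by rewrite lt_min; apply/andP; split; lra.
have y0 : 0 < p1^-1 - x by lra.
exists x^-1, (p1^-1 - x)^-1; split.
- by rewrite invr_gt0.
- by rewrite invr_gt0.
- by rewrite !invrK; ring.
- rewrite -[1]invr1 -lef_pV2 ?posrE // sinv; lra.
split.
- by rewrite -lef_pV2 ?posrE ?invr_gt0 // invrK sinv.
- rewrite -lef_pV2 ?posrE ?invr_gt0 // invrK; case: xcase => ->; lra.
Qed.

Lemma cmp {R : realType} {d} {T : measurableType d} (nu : {measure set T -> \bar R}) :
  (forall r s : R, 1 <= r -> r < s ->
     exists C : R, forall h : T -> R, measurable_fun [set: T] h ->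
       (Lnorm nu s%:E (EFin \o h) <= C%:E * Lnorm nu r%:E (EFin \o h))%E) ->
  forall r s : R, 1 <= r -> r <= s -> exists C : R, 0 < C /\
     forall h : T -> R, measurable_fun [set: T] h ->
       (Lnorm nu s%:E (EFin \o h) <= C%:E * Lnorm nu r%:E (EFin \o h))%E.
Proof.
move=> Hn r s r1; rewrite le_eqVlt => /predU1P[<-|rs].
  by exists 1; split => // h _; rewrite mul1e.
have [C hC] := Hn r s r1 rs.
exists (Num.max C 1); split; first by rewrite lt_max ltr01 orbT.
move=> h mh; apply: (le_trans (hC h mh)); apply: lee_wpmul2r; first exact: Lnorm_ge0.
by rewrite lee_fin le_max lexx.
Qed.

Theorem theorem3p2 (R : realType) (Y : Type) (X : lmodType R)
  (K : topologicalType) (d : measure_display) (T : measurableType d)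
  (nu : {measure set T -> \bar R})
  (H : set (T -> X)) (F : set (X -> Y))
  (S : (X -> Y) -> (T -> X) -> T -> R) (Rm : (T -> X) -> K -> T -> R)
  (p1 p2 q1 q2 : R) :
  compact [set: K] ->
  (forall (a : R) (f : T -> X), H f -> H (a *: f)) ->
  (forall u f, F u -> H f -> measurable_fun [set: T] (S u f)) ->
  (forall f k, H f -> measurable_fun [set: T] (Rm f k)) ->
  (forall (a : R) u f, F u -> H f ->
     forall w, `|a * S u f w| = `|S u (a *: f) w|) ->
  (forall (a : R) f k, H f ->
     forall w, `|a * Rm f k w| = `|Rm (a *: f) k w|) ->
  (forall r s : R, 1 <= r -> r < s ->
     exists C : R, forall h : T -> R, measurable_fun [set: T] h ->
       (Lnorm nu s%:E (EFin \o h) <= C%:E * Lnorm nu r%:E (EFin \o h))%E) ->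
  1 <= p1 -> p1 <= p2 -> 1 <= q1 -> q1 <= q2 ->
  p1^-1 - p2^-1 <= q1^-1 - q2^-1 ->
  RS nu H F S Rm q1 p1 `<=` RS nu H F S Rm q2 p2.
Proof.
move=> _ HZ mS mR hS hR Hn p11 p12 q11 q12 hpq u [Fu [C [C0 hC]]].
split => //.
have eS f (g : T -> R) q : H f ->
    Lnorm nu q%:E (EFin \o (fun w => S u (g w *: f) w)) = Lnorm nu q%:E (EFin \o (g \* S u f)%R).
  by move=> Hf; apply: Lnorm_ext => w; rewrite -hS.
have eR f (g : T -> R) q k : H f ->
    Lnorm nu q%:E (EFin \o (fun w => Rm (g w *: f) k w)) = Lnorm nu q%:E (EFin \o (g \* Rm f k)%R).
  by move=> Hf; apply: Lnorm_ext => w; rewrite -hR.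
have [q12e|q12l] := eqVneq q1 q2.
  subst q2.
  have p12e : p1 = p2.
    apply/eqP; rewrite eq_le p12 /=.
    rewrite subrr subr_le0 in hpq.
    by rewrite -lef_pV2 ?posrE; lra.
  subst p2; exists C; split => //.
have q1l : q1 < q2 by rewrite lt_neqAle q12l q12.
have [t [p' [t0 p'0 tp' s1 [st p2p']]]] := @exps R q1 q2 p1 p2 p11 p12 q11 q1l hpq.
have [C1 [C10 hC1]] := @cmp _ _ _ nu Hn _ _ s1 st.
have [C2 [C20 hC2]] := @cmp _ _ _ nu Hn _ _ (le_trans p11 p12) p2p'.
exists (C * C1 * C2); split; first by rewrite !mulr_gt0.
move=> f g Hf [mg gfin].
rewrite eS //.
have eset (g' : T -> R) p : [set Lnorm nu p%:E (EFin \o (fun w => Rm (g' w *: f) k w)) | k in [set: K]]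
    = [set Lnorm nu p%:E (EFin \o (g' \* Rm f k)%R) | k in [set: K]].
  by apply: eq_imagel => k _; rewrite eR.
rewrite eset.
have [[k0 _]|nok] := pselect (exists k : K, True); last first.
  exfalso.
  have h0 : in_Lq nu q1 (cst 0 : T -> R).
    split; first exact: measurable_cst.
    by rewrite /finite_norm Lnorm0 // gt_eqF // lte_fin; lra.
  have := hC f _ Hf h0; rewrite eset.
  have -> : [set Lnorm nu p1%:E (EFin \o (cst 0 \* Rm f k)%R) | k in [set: K]] = set0.
    by apply/seteqP; split => // x [k _ _]; apply: nok; exists k.
  rewrite ereal_sup0 gt0_muleNy ?lte_fin // leNgt.
  by rewrite (lt_le_trans _ (Lnorm_ge0 _ _ _)) ?ltNye.
set B := ereal_sup _.
have B0 : (0 <= B)%E.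
  apply: (le_trans (Lnorm_ge0 nu p2%:E (EFin \o (g \* Rm f k0)%R))).
  by apply: ereal_sup_ubound; exists k0.
move: B0; case Be: B => [beta||//] beta0; last first.
  by rewrite gt0_muley ?leey // lte_fin !mulr_gt0.
rewrite lee_fin in beta0.
rewrite -EFinM.
apply: (@key _ _ _ nu K (S u f) (Rm f) g q1 q2 p1 p2 t p' C C1 C2 beta) => //.
- lra.
- exact: mS.
- by move=> k; exact: mR.
- move=> g' [mg' g'fin].
  have := hC f g' Hf (conj mg' g'fin); rewrite eS // eset.
  done.
- by move=> k; rewrite -Be; apply: ereal_sup_ubound; exists k.
Qed.
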